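(* Let $K$ be a field, $P=K[x_1,\dots,x_n]$, $X=\{x_1,\dots,x_n\}$, $I\subseteq\mathfrak M=\langle x_1,\dots,x_n\rangle$ an ideal, and $Z\subseteq X$ a set of $s$ distinct indeterminates such that $I$ contains a coherently $Z$-separating tuple $(f_1,\dots,f_s)$. If $s=\dim_K(\mathrm{Lin}_{\mathfrak M}(I))$, then $\mathrm{edim}(P/I)=n-s$ and the $Z$-separating re-embedding $\Phi:P/I\to\widehat P/(I\cap\widehat P)$, $\widehat P=K[X\setminus Z]$, is an optimal re-embedding (i.e., every $K$-algebra isomorphism $P/I\cong P''/I''$ with $P''$ a polynomial ring over $K$ satisfies $\dim P''\ge n-s$).
   Context: For $f\in\mathfrak M$, $\mathrm{Lin}_{\mathfrak M}(f)$ is the homogeneous degree-one part of $f$, and $\mathrm{Lin}_{\mathfrak M}(I)=\langle\mathrm{Lin}_{\mathfrak M}(f)\mid f\in I\rangle_K$. For $f\in P$, $\mathrm{indets}(f)$ is the set of indeterminates dividing some term in the support of $f$; for $f\in\mathfrak M$ with $z$ occurring in $\mathrm{Lin}_{\mathfrak M}(f)$ and $c\neq0$ the coefficient of $z$ in $f$, $\mathrm{tail}_z(f)=z-\frac1cf$, and $f$ is $z$-separating if $z\notin\mathrm{indets}(\mathrm{tail}_z(f))$. A tuple $(f_1,\dots,f_s)$ of nonzero elements of $\mathfrak M$ is coherently $Z$-separating ($Z=\{z_1,\dots,z_s\}$) if each $f_i$ is $z_i$-separating and $z_i\notin\mathrm{indets}(f_j)$ for $j\ne i$. The $Z$-separating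 re-embedding is the $K$-algebra isomorphism $P/I\to\widehat P/(I\cap\widehat P)$ induced by $x\mapsto x$ for $x\notin Z$ and $z_i\mapsto\mathrm{tail}_{z_i}(f_i)$. $\mathrm{edim}(P/I)$ is the minimal $m$ with $P/I\cong K[y_1,\dots,y_m]/I'$ for some ideal $I'$. *)

(* Defs.v *)
From HB Require Import structures.
From mathcomp Require Import all_boot all_order all_algebra.
From mathcomp Require Import ring_quotient generic_quotient.
From mathcomp.multinomials Require Import mpoly.
Set Implicit Arguments. Unset Strict Implicit. Unset Printing Implicit Defensive.
Import GRing.Theory.
Local Open Scope ring_scope.

(* P = K[x_1,...,x_n] is {mpoly K[n]}; the indeterminate x_i is 'X_i, i : 'I_n. *)

Section Defs.
Variables (K : fieldType) (n : nat).
Local Notation P := {mpoly K[n]}.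

(* membership in the maximal ideal M = <x_1,...,x_n>: zero constant term *)
Definition inM (f : P) : bool := f@_0%MM == 0.

Definition LinM (f : P) : P :=
  \sum_(m <- msupp f | mdeg m == 1%N) f@_m *: 'X_[m].

Definition linvec (f : P) : 'rV[K]_n := \row_i (LinM f)@_(U_(i)%MM).

(* dim_K (Lin_M(I)) = d, where Lin_M(I) = <Lin_M(f) | f in I>_K, expressed
   as: d is the maximal size of a family of elements of I whose linear
   parts are K-linearly independent *)
Definition dimLinM (I : {pred P}) (d : nat) : Prop :=
  (exists fs : d.-tuple P, all (mem I) fs && free (map linvec fs)) /\
  (forall (d' : nat) (fs : d'.-tuple P),
      all (mem I) fs -> free (map linvec fs) -> (d' <= d)%N).

Definition indets (f : P) : pred 'I_n :=
  fun i => has (fun m : 'X_{1..n} => (0 < m i)%N) (msupp f).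

Definition tail (z : 'I_n) (f : P) : P := 'X_z - (f@_(U_(z)%MM))^-1 *: f.

Definition separating (z : 'I_n) (f : P) : Prop :=
  inM f /\ (LinM f)@_(U_(z)%MM) != 0 /\ ~~ indets (tail z f) z.

Definition coh_separating (s : nat) (z : 'I_s -> 'I_n) (f : 'I_s -> P) : Prop :=
  injective z /\
  (forall i, f i != 0) /\
  (forall i, separating (z i) (f i)) /\
  (forall i j, i != j -> ~~ indets (f j) (z i)).

Definition reemb_subst (s : nat) (z : 'I_s -> 'I_n) (f : 'I_s -> P) (x : 'I_n) : P :=
  if [pick j | z j == x] is Some j then tail (z j) (f j) else 'X_x.

Definition reemb (s : nat) (z : 'I_s -> 'I_n) (f : 'I_s -> P) (p : P) : P :=
  comp_mpoly [tuple reemb_subst z f x | x < n] p.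

(* membership in Phat = K[X \ Z] (viewed inside P) *)
Definition inPhat (s : nat) (z : 'I_s -> 'I_n) (q : P) : bool :=
  [forall j, ~~ indets q (z j)].

End Defs.

Local Open Scope quotient_scope.
Definition kalg_iso (K : fieldType) (n m : nat)
    (I : idealr {mpoly K[n]}) (J : idealr {mpoly K[m]}) : Prop :=
  exists phi : {rmorphism {ideal_quot I} -> {ideal_quot J}},
    bijective phi /\
    forall c : K, phi (\pi_({ideal_quot I}) (c%:MP)) = \pi_({ideal_quot J}) (c%:MP).

Definition edim_eq (K : fieldType) (n : nat) (I : idealr {mpoly K[n]}) (e : nat) : Prop :=
  (exists J : idealr {mpoly K[e]}, kalg_iso I J) /\
  (forall (m : nat) (J : idealr {mpoly K[m]}), kalg_iso I J -> (e <= m)%N).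

(* Main.v *)
Require Import Defs.
From HB Require Import structures.
From mathcomp Require Import all_boot all_order all_algebra.
From mathcomp Require Import ring_quotient generic_quotient.
From mathcomp.multinomials Require Import mpoly.
From mathcomp Require Import ring.


Module PartA.
Set Implicit Arguments. Unset Strict Implicit. Unset Printing Implicit Defensive.
Import GRing.Theory.
Local Open Scope ring_scope.

Section Gen.
Variables (K : fieldType) (n : nat).
Local Notation P := {mpoly K[n]}.

Lemma mpoly_closure (S : P -> Prop) :
  (forall c, S c%:MP) -> (forall i, S 'X_i) ->
  (forall p q, S p -> S q -> S (p + q)) ->
  (forall p q, S p -> S q -> S (p * q)) -> forall p, S p.
Proof.
move=> SC SX SD SM p; rewrite [p]mpolyE.
have S0 : S 0 by rewrite -mpolyC0.
apply: (big_ind S) => //; move=> m _; rewrite -mul_mpolyC; apply: (SM) => //.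
rewrite mpolyXE_id; apply: (big_ind S); [by rewrite -mpolyC1|exact: SM|].
move=> i _; elim: (m i) => [|k IH]; first by rewrite expr0 -mpolyC1.
by rewrite exprS; apply: (SM).
Qed.

Lemma ev0E (p : P) : p.@[fun _ => 0] = p@_0%MM.
Proof.
elim/mpolyind: p => [|c m p _ _ IH]; first by rewrite meval0 mcoeff0.
rewrite mevalD mevalZ mcoeffD mcoeffZ IH mevalX mcoeffX; congr (_ * _ + _).
have [->|] := eqVneq m 0%MM.
  by apply: big1 => i _; rewrite mnm0E expr0.
move=> nz.
have [i hi] : exists i, m i != 0%N.
  apply/existsP; apply: contraR nz; rewrite negb_exists => /forallP h.
  by apply/eqP/mnmP => i; rewrite mnm0E; apply/eqP; move: (h i); rewrite negbK.
by rewrite (bigD1 i) //= expr0n (negbTE hi) mul0r.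
Qed.

Lemma dv0E (i : 'I_n) (p : P) : (mderiv i p).@[fun _ => 0] = p@_U_(i)%MM.
Proof. by rewrite ev0E mcoeff_mderiv mnm0E add0m mulr1n. Qed.

Lemma LinM_coef (i : 'I_n) (p : P) : (LinM p)@_U_(i)%MM = p@_U_(i)%MM.
Proof.
rewrite /LinM raddf_sum /=.
under eq_bigr => m _ do rewrite mcoeffZ mcoeffX.
rewrite -big_filter.
have [hin|hnin] := boolP (U_(i)%MM \in [seq m <- msupp p | mdeg m == 1%N]).
  rewrite (bigD1_seq _ hin) ?filter_uniq ?msupp_uniq //= eqxx mulr1.
  by rewrite big1 ?addr0 // => m /negbTE ->; rewrite mulr0.
rewrite big1_seq; last first.
  move=> m /andP[_ hm]; case: eqP => [e|]; last by rewrite mulr0.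
  by move: hnin; rewrite -e hm.
move: hnin; rewrite mem_filter mdeg1 eqxx /= mcoeff_msupp negbK => /eqP ->.
by [].
Qed.

Definition nov (x : 'I_n) (q : P) := ~~ indets q x.

Lemma novP x q : reflect (forall m, m \in msupp q -> m x = 0%N) (nov x q).
Proof.
rewrite /nov /indets; apply: (iffP hasPn) => h m /h; first by rewrite lt0n negbK => /eqP.
by move=> ->.
Qed.

Lemma novC x c : nov x c%:MP.
Proof.
apply/novP => m; rewrite msuppC; case: (c == 0) => //.
by rewrite inE => /eqP ->; rewrite mnm0E.
Qed.

Lemma novX x i : i != x -> nov x 'X_i.
Proof.
move=> h; apply/novP => m; rewrite msuppX inE => /eqP ->.
by rewrite mnm1E (negbTE h).
Qed.

Lemma novD x p q : nov x p -> nov x q -> nov x (p + q).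
Proof.
move=> /novP hp /novP hq; apply/novP => m /msuppD_le; rewrite mem_cat.
by case/orP; [apply: hp|apply: hq].
Qed.

Lemma novM x p q : nov x p -> nov x q -> nov x (p * q).
Proof.
move=> /novP hp /novP hq; apply/novP => m /msuppM_le /allpairsP [[m1 m2] /= [h1 h2 ->]].
by rewrite mnmDE hp // hq.
Qed.

Lemma novZ x c p : nov x p -> nov x (c *: p).
Proof. by move=> h; rewrite -mul_mpolyC; apply: novM => //; apply: novC. Qed.

Lemma novN x p : nov x p -> nov x (- p).
Proof. by move=> h; rewrite -scaleN1r; apply: novZ. Qed.

Lemma novB x p q : nov x p -> nov x q -> nov x (p - q).
Proof. by move=> hp hq; apply: novD => //; apply: novN. Qed.

Lemma nov_comp x (t : n.-tuple P) p : (forall i, nov x (tnth t i)) -> nov x (comp_mpoly t p).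
Proof.
move=> ht; elim/mpoly_closure: p.
- by move=> c; rewrite comp_mpolyC; apply: novC.
- by move=> i; rewrite comp_mpolyXU -tnth_nth.
- by move=> p q hp hq; rewrite rmorphD; apply: novD.
- by move=> p q hp hq; rewrite rmorphM; apply: novM.
Qed.

Lemma comp_id_on (t : n.-tuple P) p :
  (forall i, tnth t i != 'X_i -> nov i p) -> comp_mpoly t p = p.
Proof.
move=> h; rewrite comp_mpolyEX [RHS]mpolyE; apply: eq_big_seq => m hm.
rewrite comp_mpolyX mpolyXE_id; congr (_ *: _); apply: eq_bigr => i _.
have [->//|ne] := eqVneq (tnth t i) 'X_i.
by rewrite (novP _ _ (h i ne) m hm) !expr0.
Qed.

Lemma comp_congr (I : idealr P) (t : n.-tuple P) p :
  (forall i, tnth t i - 'X_i \in I) -> comp_mpoly t p - p \in I.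
Proof.
move=> ht; elim/mpoly_closure: p.
- by move=> c; rewrite comp_mpolyC subrr idealr0.
- by move=> i; rewrite comp_mpolyXU -tnth_nth.
- move=> p q hp hq; rewrite rmorphD opprD addrACA; exact: rpredD.
- move=> p q hp hq; rewrite rmorphM.
  have -> : comp_mpoly t p * comp_mpoly t q - p * q =
     comp_mpoly t q * (comp_mpoly t p - p) + p * (comp_mpoly t q - q).
    by rewrite !mulrBr [comp_mpoly t q * _]mulrC [p * comp_mpoly t q]mulrC addrA subrK.
  by apply: rpredD; apply: idealMr.
Qed.
End Gen.

Lemma compM (K : fieldType) n k (t : n.-tuple {mpoly K[k]}) (p q : {mpoly K[n]}) :
  comp_mpoly t (p * q) = comp_mpoly t p * comp_mpoly t q.
Proof. exact: rmorphM. Qed.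
Lemma compD (K : fieldType) n k (t : n.-tuple {mpoly K[k]}) (p q : {mpoly K[n]}) :
  comp_mpoly t (p + q) = comp_mpoly t p + comp_mpoly t q.
Proof. exact: rmorphD. Qed.
Lemma compB (K : fieldType) n k (t : n.-tuple {mpoly K[k]}) (p q : {mpoly K[n]}) :
  comp_mpoly t (p - q) = comp_mpoly t p - comp_mpoly t q.
Proof. exact: rmorphB. Qed.
Lemma comp1 (K : fieldType) n k (t : n.-tuple {mpoly K[k]}) :
  comp_mpoly t 1 = 1.
Proof. exact: rmorph1. Qed.

End PartA.
Import PartA.


Module PartB.
Set Implicit Arguments. Unset Strict Implicit. Unset Printing Implicit Defensive.
Import GRing.Theory.
Local Open Scope ring_scope.

Section Main.
Variables (K : fieldType) (n s : nat) (I : idealr {mpoly K[n]})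
  (z : 'I_s -> 'I_n) (f : 'I_s -> {mpoly K[n]}).
Local Notation P := {mpoly K[n]}.
Hypothesis HM : forall p, p \in I -> inM p.
Hypothesis Hcoh : coh_separating z f.
Hypothesis HfI : forall i, f i \in I.

Let zinj : injective z. Proof. by case: Hcoh. Qed.
Let Hsep i : separating (z i) (f i). Proof. by case: Hcoh => _ [_ [h _]]. Qed.
Let Hind i j : i != j -> ~~ indets (f j) (z i). Proof. by case: Hcoh => _ [_ [_ h]]; apply: h. Qed.

Lemma cz_neq0 i : (f i)@_U_(z i)%MM != 0.
Proof. by case: (Hsep i) => _ [h _]; rewrite LinM_coef in h. Qed.

Lemma tail_congr j : tail (z j) (f j) - 'X_(z j) \in I.
Proof.
rewrite /tail addrAC subrr add0r rpredN -mul_mpolyC; exact: idealMr.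
Qed.

Let tt := [tuple reemb_subst z f x | x < n].

Lemma reemb_congr p : reemb z f p - p \in I.
Proof.
apply: comp_congr => i; rewrite tnth_mktuple /reemb_subst.
case: pickP => [j /eqP <-|_]; first exact: tail_congr.
by rewrite subrr idealr0.
Qed.

Lemma reemb_mem p : (p \in I) = (reemb z f p \in I).
Proof.
have h := reemb_congr p; apply/idP/idP => hp.
  by rewrite -(subrK p (reemb z f p)) rpredD.
have -> : p = reemb z f p - (reemb z f p - p) by rewrite opprB addrC subrK.
by rewrite rpredB.
Qed.

Lemma nov_subst j i : nov (z j) (reemb_subst z f i).
Proof.
rewrite /reemb_subst; case: pickP => [k _|hk].
  have [<-|ne] := eqVneq k j; first by case: (Hsep k) => _ [].
  apply: novB; first by apply: novX; apply: contra ne => /eqP /zinj ->.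
  by apply: novZ; apply: Hind; rewrite eq_sym.
by apply: novX; move: (hk j); rewrite eq_sym => ->.
Qed.

Lemma reemb_Phat p : inPhat z (reemb z f p).
Proof.
apply/forallP => j; apply: nov_comp => i; rewrite tnth_mktuple; exact: nov_subst.
Qed.

Lemma reemb_id q : inPhat z q -> reemb z f q = q.
Proof.
move=> /forallP hq; apply: comp_id_on => i; rewrite tnth_mktuple /reemb_subst.
case: pickP => [j /eqP <- _|]; first exact: hq.
by rewrite eqxx.
Qed.

Lemma card_compl : #|[pred x | x \notin codom z]| = (n - s)%N.
Proof.
have h := cardC (mem (codom z)); rewrite card_codom // !card_ord in h.
have -> : (n - s = #|[predC codom z]|)%N by rewrite -[X in (X - s)%N]h addKn.
by apply: eq_card => x; rewrite !inE.
Qed.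

Lemma coefUM x (p q : P) :
  (p * q)@_U_(x)%MM = p@_0%MM * q@_U_(x)%MM + q@_0%MM * p@_U_(x)%MM.
Proof.
rewrite -!dv0E -!ev0E mderivM mevalD !mevalM.
by rewrite addrC [X in _ + X]mulrC.
Qed.

Lemma coef0M (p q : P) : (p * q)@_0%MM = p@_0%MM * q@_0%MM.
Proof. by rewrite -!ev0E mevalM. Qed.

Lemma novcoef x (p : P) : nov x p -> p@_U_(x)%MM = 0.
Proof.
move=> /novP h; apply/eqP; rewrite mcoeff_eq0; apply/negP => /h.
by rewrite mnm1E eqxx.
Qed.

Lemma fcoef j k : j != k -> (f k)@_U_(z j)%MM = 0.
Proof. by move=> ne; apply: novcoef; apply: Hind. Qed.

Lemma linvecE (p : P) i : linvec p 0 i = p@_U_(i)%MM.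
Proof. by rewrite mxE LinM_coef. Qed.

Hypothesis Hdim : dimLinM (mem I) s.

Lemma maximal (g : P) : g \in I -> (forall k, g@_U_(z k)%MM = 0) ->
  forall x, g@_U_(x)%MM = 0.
Proof.
move=> gI gz x; apply/eqP/negP => /negP gx.
pose F (i : 'I_s.+1) := if unlift ord_max i is Some j then f j else g.
pose fs := [tuple F i | i < s.+1].
suff: (s.+1 <= s)%N by rewrite ltnn.
case: Hdim => _ h; apply: (h s.+1 fs).
  apply/allP => p /mapP [i _ ->]; rewrite /F; case: unlift => [j|] //=.
  all: try exact: HfI.
change (free (map_tuple (@linvec K n) fs)).
apply/freeP => k hk.
have hc : forall y : 'I_n, \sum_(i < s.+1) k i * (F i)@_U_(y)%MM = 0.
  move=> y; transitivity ((\sum_(i < s.+1) k i *: (map_tuple (@linvec K n) fs)`_i) 0 y);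
    last by rewrite hk mxE.
  rewrite summxE; apply: eq_bigr => i _.
  rewrite mxE (nth_map 0) ?size_tuple // -tnth_nth tnth_mktuple.
  by rewrite linvecE.
have wl : forall i : 'I_s, widen_ord (leqnSn s) i = lift ord_max i.
  by move=> i; apply: val_inj; rewrite /= /bump leqNgt ltn_ord.
have Fl : forall i : 'I_s, F (lift ord_max i) = f i by move=> i; rewrite /F liftK.
have Fm : F ord_max = g by rewrite /F unlift_none.
have hc' : forall y : 'I_n,
    \sum_(i < s) k (lift ord_max i) * (f i)@_U_(y)%MM + k ord_max * g@_U_(y)%MM = 0.
  move=> y; rewrite -[RHS](hc y) big_ord_recr /= Fm; congr (_ + _).
  by apply: eq_bigr => i _; rewrite wl Fl.
have kl : forall j, k (lift ord_max j) = 0.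
  move=> j; move: (hc' (z j)); rewrite gz mulr0 addr0 (bigD1 j) //= big1 => [|j' ne].
    rewrite addr0 => /eqP; rewrite mulf_eq0 (negbTE (cz_neq0 j)) orbF.
    by move/eqP.
  by rewrite fcoef ?mulr0 // eq_sym.
have km : k ord_max = 0.
  move: (hc' x); rewrite big1 => [|i _]; last by rewrite kl mul0r.
  by rewrite add0r => /eqP; rewrite mulf_eq0 (negbTE gx) orbF => /eqP.
move=> i; case: (unliftP ord_max i) => [j ->|->] //; exact: kl.
Qed.

Definition rr j x := (f j)@_U_(x)%MM / (f j)@_U_(z j)%MM.
Definition Dx x (p : P) := p@_U_(x)%MM - \sum_j rr j x * p@_U_(z j)%MM.

Lemma Dx_I x p : p \in I -> Dx x p = 0.
Proof.
move=> pI.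
pose g := p - \sum_j (p@_U_(z j)%MM / (f j)@_U_(z j)%MM) *: f j.
have gI : g \in I.
  apply: rpredB => //; apply: rpred_sum => j _; rewrite -mul_mpolyC.
  exact: idealMr.
have gc y : g@_U_(y)%MM = p@_U_(y)%MM -
    \sum_j (p@_U_(z j)%MM / (f j)@_U_(z j)%MM) * (f j)@_U_(y)%MM.
  by rewrite /g mcoeffB raddf_sum /=; congr (_ - _); apply: eq_bigr => j _; rewrite mcoeffZ.
have gz k : g@_U_(z k)%MM = 0.
  rewrite gc (bigD1 k) //= big1 ?addr0; last by move=> j ne; rewrite (@fcoef k j) ?mulr0 // eq_sym.
  by rewrite mulfVK ?cz_neq0 // subrr.
rewrite /Dx; have := maximal gI gz x; rewrite gc => /eqP; rewrite subr_eq0 => /eqP ->.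
apply/eqP; rewrite subr_eq0; apply/eqP/eq_bigr => j _.
by rewrite /rr mulrC mulrA mulrAC.
Qed.

Definition pder (d : P -> K) :=
  [/\ forall p q, d (p + q) = d p + d q,
      forall c, d c%:MP = 0,
      forall p q, d (p * q) = p@_0%MM * d q + q@_0%MM * d p
    & forall p, p \in I -> d p = 0].

Lemma coefUC x c : (c%:MP : P)@_U_(x)%MM = 0.
Proof.
rewrite mcoeffC; case: eqP => [h|]; last by rewrite mulr0.
by have := mdeg1 x; rewrite h mdeg0.
Qed.

Lemma Dx_pder x : pder (Dx x).
Proof.
split.
- move=> p q; rewrite /Dx !mcoeffD.
  under eq_bigr => j _ do rewrite mcoeffD mulrDr.
  by rewrite big_split /= opprD addrACA.
- move=> c; rewrite /Dx coefUC big1 ?subr0 // => j _; by rewrite coefUC mulr0.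
- move=> p q; rewrite /Dx coefUM.
  under eq_bigr => j _ do rewrite coefUM mulrDr.
  rewrite big_split /= !mulrBr !mulr_sumr opprD addrACA.
  have e1 : forall a b : P, \sum_(i < s) rr i x * (a@_0%MM * b@_U_(z i)%MM) =
      \sum_(i < s) a@_0%MM * (rr i x * b@_U_(z i)%MM).
    by move=> a b; apply: eq_bigr => j _; rewrite mulrCA.
  by rewrite !e1.
- exact: Dx_I.
Qed.

Lemma pder_sum N (k : 'I_N -> K) (d : 'I_N -> P -> K) :
  (forall i, pder (d i)) -> pder (fun p => \sum_i k i * d i p).
Proof.
move=> hd; split.
- move=> p q; rewrite -big_split /=; apply: eq_bigr => i _.
  by case: (hd i) => -> _ _ _; rewrite mulrDr.
- by move=> c; apply: big1 => i _; case: (hd i) => _ -> _ _; rewrite mulr0.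
- move=> p q; rewrite !mulr_sumr -big_split /=; apply: eq_bigr => i _.
  by case: (hd i) => _ _ -> _; rewrite mulrDr; congr (_ + _); exact: mulrCA.
- by move=> p pI; apply: big1 => i _; case: (hd i) => _ _ _ ->; rewrite ?mulr0.
Qed.
End Main.

End PartB.
Import PartB.


Module PartC.
Set Implicit Arguments. Unset Strict Implicit. Unset Printing Implicit Defensive.
Import GRing.Theory.
Local Open Scope ring_scope.
Local Open Scope quotient_scope.

Lemma piP (K : fieldType) n (I : idealr {mpoly K[n]}) (x y : {mpoly K[n]}) :
  (\pi_({ideal_quot I}) x = \pi y) <-> x - y \in I.
Proof. by rewrite Quotient.idealrBE; split; move/eqP. Qed.

Lemma piMr (K : fieldType) n (I : idealr {mpoly K[n]}) (x y : {mpoly K[n]}) :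
  \pi_({ideal_quot I}) (x * y) = \pi x * \pi y.
Proof. by rewrite rmorphM. Qed.
Lemma piDr (K : fieldType) n (I : idealr {mpoly K[n]}) (x y : {mpoly K[n]}) :
  \pi_({ideal_quot I}) (x + y) = \pi x + \pi y.
Proof. by rewrite rmorphD. Qed.

Section Core.
Variables (K : fieldType) (n m : nat) (I : idealr {mpoly K[n]}) (J : idealr {mpoly K[m]}).
Local Notation P := {mpoly K[n]}.
Local Notation Q := {mpoly K[m]}.
Local Notation A := {ideal_quot I}.
Local Notation B := {ideal_quot J}.
Variables (phi : {rmorphism A -> B}) (psi : B -> A).
Hypotheses (K1 : cancel phi psi) (K2 : cancel psi phi).
Hypothesis hc : forall c : K, phi (\pi_A (c%:MP)) = \pi_B (c%:MP).
Hypothesis HM : forall p, p \in I -> inM p.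

Lemma psiM a b : psi (a * b) = psi a * psi b.
Proof. by apply: (can_inj K1); rewrite rmorphM !K2. Qed.
Lemma psiD a b : psi (a + b) = psi a + psi b.
Proof. by apply: (can_inj K1); rewrite rmorphD !K2. Qed.
Lemma psiC c : psi (\pi_B c%:MP) = \pi_A c%:MP.
Proof. by rewrite -hc K1. Qed.

Definition lft (q : Q) : P := repr (psi (\pi_B q)).

Lemma lftM q1 q2 : lft (q1 * q2) - lft q1 * lft q2 \in I.
Proof. by apply/(@piP _ _ I); rewrite piMr /lft !reprK -psiM -piMr. Qed.
Lemma lftD q1 q2 : lft (q1 + q2) - (lft q1 + lft q2) \in I.
Proof. by apply/(@piP _ _ I); rewrite piDr /lft !reprK -psiD -piDr. Qed.
Lemma lftC c : lft c%:MP - c%:MP \in I.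
Proof. by apply/(@piP _ _ I); rewrite /lft reprK psiC. Qed.


Lemma core (d : P -> K) :
  (forall p q, d (p + q) = d p + d q) -> (forall c, d c%:MP = 0) ->
  (forall p q, d (p * q) = p@_0%MM * d q + q@_0%MM * d p) ->
  (forall p, p \in I -> d p = 0) ->
  (forall j, d (lft 'X_j) = 0) -> forall p, d p = 0.
Proof.
move=> dD dC dM dI dX.
have d0 : d 0 = 0 by rewrite -(mpolyC0 n K) dC.
have dN p : d (- p) = - d p.
  by apply/eqP; rewrite -subr_eq0 opprK -dD addNr d0.
have dE p q : p - q \in I -> d p = d q.
  move=> h; apply/eqP; rewrite -subr_eq0 -dN -dD; exact/eqP/dI.
have eE p q : p - q \in I -> p@_0%MM = q@_0%MM.
  by move=> /HM; rewrite /inM mcoeffB subr_eq0 => /eqP.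
have S q : d (lft q) = 0.
  elim/mpoly_closure: q.
  - by move=> c; rewrite (dE _ _ (lftC c)) dC.
  - exact: dX.
  - by move=> p q hp hq; rewrite (dE _ _ (lftD p q)) dD hp hq addr0.
  - by move=> p q hp hq; rewrite (dE _ _ (lftM p q)) dM hp hq !mulr0 addr0.
move=> p; rewrite -(S (repr (phi (\pi_A p)))); apply: dE.
by apply/(@piP _ _ I); rewrite /lft !reprK K1.
Qed.
End Core.

End PartC.
Import PartC.


Module PartD.
Set Implicit Arguments. Unset Strict Implicit. Unset Printing Implicit Defensive.
Import GRing.Theory.
Local Open Scope ring_scope.
Local Open Scope quotient_scope.

Lemma free_size_le (K : fieldType) m (X : seq 'rV[K]_m) : free X -> (size X <= m)%N.
Proof.
move=> /eqP <-; have := dimvS (subvf <<X>>); rewrite dimvf /dim /= mul1n.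
by [].
Qed.

Lemma optimal (K : fieldType) (n s : nat)
    (I : idealr {mpoly K[n]})
    (z : 'I_s -> 'I_n) (f : 'I_s -> {mpoly K[n]}) :
  (forall p, p \in I -> inM p) ->
  coh_separating z f ->
  (forall i, f i \in I) ->
  dimLinM (mem I) s ->
  (forall (m : nat) (J : idealr {mpoly K[m]}), kalg_iso I J -> (n - s <= m)%N).
Proof.
move=> HM Hcoh HfI Hdim m J [phi [[psi K1 K2] hc]].
pose nz := in_tuple (enum [pred x | x \notin codom z]).
have hsz : size nz = (n - s)%N by rewrite /= -cardE (card_compl Hcoh).
pose vecf x := \row_(j < m) Dx z f x (lft psi 'X_j).
rewrite -hsz -(size_map vecf); apply: free_size_le.
change (free (map_tuple vecf nz)); apply/freeP => k hk.
pose d p := \sum_i k i * Dx z f (tnth nz i) p.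
have [dD dC dM dI] : pder I d.
  by apply: pder_sum => i; apply: (Dx_pder Hcoh HfI Hdim).
have d0 : forall p, d p = 0.
  apply: (core K1 K2 hc HM dD dC dM dI) => j.
  transitivity ((\sum_i k i *: (map_tuple vecf nz)`_i) 0 j); last by rewrite hk mxE.
  rewrite summxE; apply: eq_bigr => i _; rewrite mxE -tnth_nth tnth_map mxE.
  by [].
have nzZ i j : tnth nz i != z j.
  have : tnth nz i \in enum [pred x | x \notin codom z] by apply: mem_tnth.
  by rewrite mem_enum inE; apply: contra => /eqP ->; apply: codom_f.
have DX i i' : Dx z f (tnth nz i) 'X_(tnth nz i') = (i' == i)%:R.
  rewrite /Dx mcoeffXU big1; last by move=> j _; rewrite mcoeffXU (negbTE (nzZ _ _)) mulr0.
  rewrite subr0; suff -> : (tnth nz i' == tnth nz i) = (i' == i) by [].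
  pose x0 := tnth nz i.
  rewrite (tnth_nth x0 nz i') (tnth_nth x0 nz i).
  by rewrite nth_uniq ?size_tuple ?enum_uniq //.
move=> i; rewrite -(d0 'X_(tnth nz i)) /d (bigD1 i) //= DX eqxx mulr1 big1 ?addr0 //.
by move=> i' ne; rewrite DX eq_sym (negbTE ne) mulr0.
Qed.

End PartD.
Import PartD.


Module PartE.
Set Implicit Arguments. Unset Strict Implicit. Unset Printing Implicit Defensive.
Import GRing.Theory.
Local Open Scope ring_scope.
Local Open Scope quotient_scope.

Section Pre.
Variables (K : fieldType) (n N : nat) (I : idealr {mpoly K[n]}) (t : N.-tuple {mpoly K[n]}).
Definition Jpred : pred {mpoly K[N]} := fun q => comp_mpoly t q \in I.
Lemma Jpred_closed : idealr_closed Jpred.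
Proof.
split.
- by change (comp_mpoly t 0 \in I); rewrite rmorph0 idealr0.
- by change (~~ (comp_mpoly t 1 \in I)); rewrite rmorph1 idealr1.
- move=> a u v hu hv.
  have hu' : comp_mpoly t u \in I := hu.
  have hv' : comp_mpoly t v \in I := hv.
  change (comp_mpoly t (a * u + v) \in I).
  by rewrite rmorphD rmorphM; apply: rpredD => //; apply: idealMr.
Qed.
HB.instance Definition _ := isIdealr.Build _ Jpred Jpred_closed.
End Pre.


Lemma piBr (K : fieldType) n (I : idealr {mpoly K[n]}) (x y : {mpoly K[n]}) :
  \pi_({ideal_quot I}) (x - y) = \pi x - \pi y.
Proof. by rewrite rmorphB. Qed.

Lemma pi1 (K : fieldType) n (I : idealr {mpoly K[n]}) :
  \pi_({ideal_quot I}) 1 = 1.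
Proof. exact: rmorph1. Qed.

Section Emb.
Variables (K : fieldType) (n s : nat) (I : idealr {mpoly K[n]})
  (z : 'I_s -> 'I_n) (f : 'I_s -> {mpoly K[n]}).
Hypothesis Hcoh : coh_separating z f.
Hypothesis HfI : forall i, f i \in I.
Local Notation P := {mpoly K[n]}.
Local Notation N := (n - s)%N.
Local Notation Q := {mpoly K[N]}.

Definition Apred := [pred x : 'I_n | x \notin codom z].
Definition ee (k : 'I_N) : 'I_n :=
  nth (Ordinal (leq_trans (ltn_ord k) (leq_subr s n))) (enum Apred) k.
Definition tI : N.-tuple P := [tuple 'X_(ee k) | k < N].
Definition tS : n.-tuple Q :=
  [tuple (if [pick k | ee k == x] is Some k then 'X_k else 0) | x < n].
Definition rho (p : P) : Q := comp_mpoly tS (reemb z f p).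
Definition Jid : idealr Q := Jpred I tI.

Lemma size_enumA : size (enum Apred) = N.
Proof. by rewrite -cardE (card_compl Hcoh). Qed.

Lemma ee_A k : ee k \in Apred.
Proof. by rewrite -mem_enum /ee mem_nth // size_enumA. Qed.

Lemma ee_inj : injective ee.
Proof.
move=> k1 k2; pose y := ee k1.
have hs : forall k : 'I_N, (k < size (enum Apred))%N by move=> k; rewrite size_enumA.
rewrite /ee (set_nth_default y _ (hs k1)) (set_nth_default y _ (hs k2)).
move/eqP; rewrite nth_uniq ?hs ?enum_uniq // => /eqP; exact: val_inj.
Qed.

Lemma iota_sigma (q : P) : inPhat z q -> comp_mpoly tI (comp_mpoly tS q) = q.
Proof.
move=> /forallP hq.
pose t2 := [tuple comp_mpoly tI (tnth tS x) | x < n].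
have E : forall q', comp_mpoly tI (comp_mpoly tS q') = comp_mpoly t2 q'.
  elim/mpoly_closure.
  - by move=> c; rewrite !comp_mpolyC.
  - by move=> i; rewrite !comp_mpolyXU -(tnth_nth 0 tS i) -(tnth_nth 0 t2 i) !tnth_mktuple.
  - by move=> p1 p2 h1 h2; rewrite !compD h1 h2.
  - by move=> p1 p2 h1 h2; rewrite !compM h1 h2.
rewrite E.
apply: comp_id_on => i; rewrite !tnth_mktuple.
case: pickP => [k /eqP ek|hk].
  by rewrite comp_mpolyXU -tnth_nth tnth_mktuple ek eqxx.
move=> _; have : i \notin Apred.
  apply/negP; rewrite -mem_enum => hi.
  have hk0 : (index i (enum Apred) < N)%N by rewrite -size_enumA index_mem.
  move: (hk (Ordinal hk0)); rewrite /ee /=.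
  rewrite (set_nth_default i) ?size_enumA // nth_index // eqxx.
  by [].
rewrite inE negbK => /codomP [j ->]; exact: hq.
Qed.

Lemma memJ q : (q \in Jid) = (comp_mpoly tI q \in I).
Proof. by []. Qed.

Lemma memI_congr u v : u - v \in I -> (u \in I) = (v \in I).
Proof.
move=> h; apply/idP/idP => hu.
  have -> : v = u - (u - v) by rewrite opprB addrC subrK.
  exact: rpredB.
have -> : u = (u - v) + v by rewrite subrK.
exact: rpredD.
Qed.

Lemma rhoB x y : rho (x - y) = rho x - rho y.
Proof. by rewrite /rho /reemb !compB. Qed.
Lemma rhoM x y : rho (x * y) = rho x * rho y.
Proof. by rewrite /rho /reemb !compM. Qed.
Lemma rho1 : rho 1 = 1.
Proof. by rewrite /rho /reemb !comp1. Qed.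
Lemma rhoC c : rho c%:MP = c%:MP.
Proof. by rewrite /rho /reemb !comp_mpolyC. Qed.

Lemma W p : comp_mpoly tI (rho p) - p \in I.
Proof. by rewrite /rho iota_sigma ?reemb_Phat // reemb_congr. Qed.

Lemma key x y : (rho x - rho y \in Jid) = (x - y \in I).
Proof.
rewrite memJ compB; apply: memI_congr.
have -> : comp_mpoly tI (rho x) - comp_mpoly tI (rho y) - (x - y) =
   (comp_mpoly tI (rho x) - x) - (comp_mpoly tI (rho y) - y).
  by ring.
by apply: rpredB; apply: W.
Qed.

Definition phi_fun (a : {ideal_quot I}) : {ideal_quot Jid} := \pi_({ideal_quot Jid}) (rho (repr a)).

Lemma phi_pi p : phi_fun (\pi_({ideal_quot I}) p) = \pi_({ideal_quot Jid}) (rho p).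
Proof. by rewrite /phi_fun; apply/eqP; rewrite -Quotient.idealrBE key Quotient.idealrBE reprK. Qed.

Lemma phi_zmod : {morph phi_fun : x y / x - y}.
Proof.
move=> a b; rewrite -[a]reprK -[b]reprK -piBr !phi_pi rhoB.
by rewrite piBr.
Qed.
Lemma phi_monoid : monoid_morphism phi_fun.
Proof.
split.
  by rewrite -(pi1 I) phi_pi rho1 pi1.
move=> a b; rewrite -[a]reprK -[b]reprK -piMr !phi_pi rhoM.
by rewrite piMr.
Qed.

HB.instance Definition _ := GRing.isZmodMorphism.Build _ _ phi_fun phi_zmod.
HB.instance Definition _ := GRing.isMonoidMorphism.Build _ _ phi_fun phi_monoid.

Definition psi_fun (b : {ideal_quot Jid}) : {ideal_quot I} :=
  \pi_({ideal_quot I}) (comp_mpoly tI (repr b)).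

Lemma rho_iota q : rho (comp_mpoly tI q) - q \in Jid.
Proof. by rewrite memJ compB; exact: W. Qed.

Lemma phi_bij : bijective phi_fun.
Proof.
exists psi_fun.
  move=> a; rewrite /psi_fun /phi_fun; rewrite -[in RHS](reprK a).
  apply/eqP; rewrite -Quotient.idealrBE.
  have h1 : repr (\pi_({ideal_quot Jid}) (rho (repr a))) - rho (repr a) \in Jid.
    by rewrite Quotient.idealrBE reprK.
  rewrite memJ compB in h1.
  have h2 := W (repr a).
  have -> : comp_mpoly tI (repr (\pi_({ideal_quot Jid}) (rho (repr a)))) - repr a =
     (comp_mpoly tI (repr (\pi_({ideal_quot Jid}) (rho (repr a)))) - comp_mpoly tI (rho (repr a)))
     + (comp_mpoly tI (rho (repr a)) - repr a) by ring.
  exact: rpredD.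
move=> b; rewrite /psi_fun phi_pi -[in RHS](reprK b).
by apply/eqP; rewrite -Quotient.idealrBE; apply: rho_iota.
Qed.

Lemma phi_C c : phi_fun (\pi_({ideal_quot I}) c%:MP) = \pi_({ideal_quot Jid}) c%:MP.
Proof. by rewrite phi_pi rhoC. Qed.

Lemma exists_iso : kalg_iso I Jid.
Proof.
exists phi_fun; split; [exact: phi_bij | exact: phi_C].
Qed.
End Emb.

End PartE.
Import PartE.

Local Open Scope ring_scope.

Theorem corollary4p2 (K : fieldType) (n s : nat)
    (I : idealr {mpoly K[n]})
    (z : 'I_s -> 'I_n) (f : 'I_s -> {mpoly K[n]}) :
  (forall p, p \in I -> inM p) ->
  coh_separating z f ->
  (forall i, f i \in I) ->
  dimLinM (mem I) s ->
  [/\ edim_eq I (n - s)%N,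
      (forall p, inPhat z (reemb z f p)),
      (forall p, (p \in I) = (reemb z f p \in I)),
      (forall q, inPhat z q -> exists p, reemb z f p - q \in I)
      /\ #|[pred x | x \notin codom z]| = (n - s)%N
    & (forall (m : nat) (J : idealr {mpoly K[m]}), kalg_iso I J -> (n - s <= m)%N)].
Proof.
move=> HM Hcoh HfI Hdim.
have opt := optimal HM Hcoh HfI Hdim.
split => //.
- by split => //; eexists; exact: (exists_iso Hcoh HfI).
- exact: (reemb_Phat Hcoh).
- exact: (reemb_mem z HfI).
- split; last exact: (card_compl Hcoh).
  move=> q hq; exists q; rewrite (reemb_id f) // GRing.subrr; exact: GRing.rpred0.
Qed.
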